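(* Let $(X,d)$ be a metric space, $\mathcal{R}$ an arbitrary binary relation on $X$, and $p$ a $w$-distance on $X$ with respect to $\mathcal{R}$. Let $T:X\to X$ satisfy: (1) there exists $Y\subseteq X$ with $T(X)\subseteq Y$ such that $(Y,d)$ is $\mathcal{R}$-complete; (2) $X(T,\mathcal{R})\neq\emptyset$ and $\mathcal{R}$ is $T$-closed; (3) either $T$ is $\mathcal{R}$-continuous, or $\mathcal{R}|_Y$ is $d$-self-closed; (4) there exists $\lambda\in[0,1)$ such that $p(Tx,Ty)\le\lambda\,p(x,y)$ for all $x,y\in X$ with $(x,y)\in\mathcal{R}$. Then $T$ has a fixed point, i.e. $F(T)=\{x\in X: Tx=x\}\neq\emptyset$.
   Context: A binary relation $\mathcal{R}$ on $X$ is a subset of $X\times X$. A sequence $(x_n)$ is $\mathcal{R}$-preserving if $(x_n,x_{n+1})\in\mathcal{R}$ for all $n\in\mathbb{N}\cup\{0\}$. $(Y,d)$ is $\mathcal{R}$-complete if every $\mathcal{R}$-preserving Cauchy sequence in $Y$ converges in $Y$. $X(T,\mathcal{R})=\{x\in X:(x,Tx)\in\mathcal{R}\}$. $\mathcal{R}$ is $T$-closed if $(x,y)\in\mathcal{R}$ implies $(Tx,Ty)\in\mathcal{R}$. $T$ is $\mathcal{R}$-continuous if for every $x\in X$ and every $\mathcal{R}$-preserving sequence $x_n\to x$ one has $Tx_n\to Tx$. $\mathcal{R}|_Y=\mathcal{R}\cap(Y\times Y)$ is $d$-self-closed if for every $\mathcal{R}|_Y$-preserving sequence $(x_n)$ in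 $Y$ with $x_n\to x$ there is a subsequence $(x_{n_k})$ with $(x_{n_k},x)\in\mathcal{R}|_Y$ for all $k$. A function $g:X\to\mathbb{R}\cup\{\pm\infty\}$ is $\mathcal{R}$-lower semi-continuous at $x$ if for every $\mathcal{R}$-preserving sequence $x_n\to x$, $\liminf_n g(x_n)\ge g(x)$. A function $p:X\times X\to[0,\infty)$ is a $w$-distance with respect to $\mathcal{R}$ if: (w1') $p(x,z)\le p(x,y)+p(y,z)$ for all $x,y,z$; (w2') for each $x$, $p(x,\cdot)$ is $\mathcal{R}$-lower semi-continuous at every point; (w3') for every $\epsilon>0$ there is $\delta>0$ such that $p(z,x)\le\delta$ and $p(z,y)\le\delta$ imply $d(x,y)\le\epsilon$. *)

(* Defs.v *)
From Stdlib Require Import Reals.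
Open Scope R_scope.

Section Defs.
Context {X : Type}.

Record is_metric (d : X -> X -> R) : Prop := {
  metric_nonneg : forall x y, 0 <= d x y;
  metric_zero : forall x y, d x y = 0 <-> x = y;
  metric_sym : forall x y, d x y = d y x;
  metric_triangle : forall x y z, d x z <= d x y + d y z
}.

Definition rel_preserving (Rel : X -> X -> Prop) (x : nat -> X) : Prop :=
  forall n : nat, Rel (x n) (x (S n)).

Definition d_cauchy (d : X -> X -> R) (x : nat -> X) : Prop :=
  forall eps, 0 < eps -> exists N : nat, forall m n : nat,
    (N <= m)%nat -> (N <= n)%nat -> d (x m) (x n) < eps.

Definition d_converges (d : X -> X -> R) (x : nat -> X) (l : X) : Prop :=
  forall eps, 0 < eps -> exists N : nat, forall n : nat,
    (N <= n)%nat -> d (x n) l < eps.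

Definition rel_complete (d : X -> X -> R) (Rel : X -> X -> Prop)
    (Y : X -> Prop) : Prop :=
  forall x : nat -> X, (forall n, Y (x n)) -> rel_preserving Rel x ->
    d_cauchy d x -> exists l, Y l /\ d_converges d x l.

Definition rel_restrict (Rel : X -> X -> Prop) (Y : X -> Prop) : X -> X -> Prop :=
  fun x y => Rel x y /\ Y x /\ Y y.

Definition T_closed (Rel : X -> X -> Prop) (T : X -> X) : Prop :=
  forall x y, Rel x y -> Rel (T x) (T y).

Definition rel_continuous (d : X -> X -> R) (Rel : X -> X -> Prop)
    (T : X -> X) : Prop :=
  forall (l : X) (x : nat -> X), rel_preserving Rel x -> d_converges d x l ->
    d_converges d (fun n => T (x n)) (T l).

Definition d_self_closed (d : X -> X -> R) (Rel : X -> X -> Prop)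
    (Y : X -> Prop) : Prop :=
  forall (x : nat -> X) (l : X), (forall n, Y (x n)) ->
    rel_preserving (rel_restrict Rel Y) x -> d_converges d x l ->
    exists f : nat -> nat, (forall k, (f k < f (S k))%nat) /\
      forall k, rel_restrict Rel Y (x (f k)) l.

(* liminf_n a_n >= c  (for a real sequence; liminf may be +infinity) *)
Definition liminf_ge (a : nat -> R) (c : R) : Prop :=
  forall eps, 0 < eps -> exists N : nat, forall n : nat, (N <= n)%nat -> c - eps < a n.

Definition rel_lsc_at (d : X -> X -> R) (Rel : X -> X -> Prop)
    (g : X -> R) (l : X) : Prop :=
  forall x : nat -> X, rel_preserving Rel x -> d_converges d x l ->
    liminf_ge (fun n => g (x n)) (g l).

Record is_w_distance (d : X -> X -> R) (Rel : X -> X -> Prop)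
    (p : X -> X -> R) : Prop := {
  wdist_nonneg : forall x y, 0 <= p x y;
  wdist_w1 : forall x y z, p x z <= p x y + p y z;
  wdist_w2 : forall x l, rel_lsc_at d Rel (p x) l;
  wdist_w3 : forall eps, 0 < eps -> exists delta, 0 < delta /\
    forall x y z, p z x <= delta -> p z y <= delta -> d x y <= eps
}.

End Defs.

(* Main.v *)
Require Import Defs.
From Stdlib Require Import Reals Lra Lia.
Open Scope R_scope.

Lemma incr_ge (f : nat -> nat) : (forall k, (f k < f (S k))%nat) -> forall k, (k <= f k)%nat.
Proof. intros H k; induction k; [lia|]. specialize (H k); lia. Qed.

Theorem theorem2p1 (X : Type) (d : X -> X -> R) (Rel : X -> X -> Prop)
    (p : X -> X -> R) (T : X -> X)
    (Hd : is_metric d)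
    (Hp : is_w_distance d Rel p)
    (H13 : exists Y : X -> Prop,
        (forall x, Y (T x)) /\ rel_complete d Rel Y /\
        (rel_continuous d Rel T \/ d_self_closed d Rel Y))
    (H2a : exists x, Rel x (T x))
    (H2b : T_closed Rel T)
    (H4 : exists lambda, 0 <= lambda < 1 /\
        forall x y, Rel x y -> p (T x) (T y) <= lambda * p x y) :
  exists x, T x = x.
Proof.
  destruct H13 as [Y [HY [Hc Hcs]]].
  destruct H2a as [x0 Hx0].
  destruct H4 as [lam [[Hl0 Hl1] Hcon]].
  set (x := fun n => Nat.iter n T x0).
  assert (Hrel : forall n, Rel (x n) (x (S n))).
  { induction n; [exact Hx0|]. apply H2b; exact IHn. }
  set (a0 := p (x 0%nat) (x 1%nat)).
  assert (Ha0 : 0 <= a0) by apply (wdist_nonneg _ _ _ Hp).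
  assert (Han : forall n, p (x n) (x (S n)) <= lam ^ n * a0).
  { induction n; [rewrite pow_O; unfold a0; lra|].
    apply Rle_trans with (lam * p (x n) (x (S n))); [apply Hcon, Hrel|].
    rewrite <- tech_pow_Rmult.
    apply Rmult_le_compat_l with (r := lam) in IHn; [|lra]. rewrite Rmult_assoc; lra. }
  assert (Hsum : forall n k, (1 - lam) * p (x n) (x (n + S k)%nat)
                             <= a0 * (lam ^ n - lam ^ (n + S k))).
  { intros n k; induction k.
    - replace (n + 1)%nat with (S n) by lia. rewrite <- tech_pow_Rmult.
      specialize (Han n).
      apply Rmult_le_compat_l with (r := 1 - lam) in Han; [|lra].
      nra.
    - replace (n + S (S k))%nat with (S (n + S k)) by lia.
      pose proof (wdist_w1 _ _ _ Hp (x n) (x (n + S k)%nat) (x (S (n + S k)))) as Ht.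
      pose proof (Han (n + S k)%nat) as Hb.
      simpl pow. nra. }
  set (C := a0 / (1 - lam)).
  assert (HC : 0 <= C) by (unfold C; apply Rmult_le_pos; [lra|apply Rlt_le, Rinv_0_lt_compat; lra]).
  assert (Hbd : forall n m, (n < m)%nat -> p (x n) (x m) <= C * lam ^ n).
  { intros n m Hnm.
    replace m with (n + S (m - S n))%nat by lia.
    pose proof (Hsum n (m - S n)%nat) as Hs.
    pose proof (pow_le lam (n + S (m - S n)) Hl0).
    apply Rmult_le_reg_l with (1 - lam); [lra|].
    replace ((1 - lam) * (C * lam ^ n)) with (a0 * lam ^ n)
      by (unfold C; field; lra).
    nra. }
  assert (Hsmall : forall e, 0 < e -> exists N, forall n, (n >= N)%nat -> C * lam ^ n < e).
  { intros e He.
    destruct (pow_lt_1_zero lam ltac:(rewrite Rabs_pos_eq; lra) (e / (C + 1)))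
      as [N HN]. { apply Rdiv_lt_0_compat; lra. }
    exists N; intros n Hn. specialize (HN n Hn).
    rewrite Rabs_pos_eq in HN by (apply pow_le; lra).
    pose proof (pow_le lam n Hl0).
    apply Rmult_lt_compat_l with (r := C + 1) in HN; [|lra].
    replace ((C + 1) * (e / (C + 1))) with e in HN by (field; lra).
    nra. }
  set (y := fun n => x (S n)).
  assert (HyY : forall n, Y (y n)) by (intro n; apply HY).
  assert (Hyrel : rel_preserving Rel y) by (intro n; apply Hrel).
  assert (Hcau : d_cauchy d y).
  { intros e He.
    destruct (wdist_w3 _ _ _ Hp (e / 2)) as [del [Hdel Hw]]; [lra|].
    destruct (Hsmall del Hdel) as [N HN].
    exists N; intros m n Hm Hn.
    assert (d (y m) (y n) <= e / 2); [|lra].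
    apply Hw with (z := x N).
    - left. eapply Rle_lt_trans; [apply Hbd; lia|]. apply HN; lia.
    - left. eapply Rle_lt_trans; [apply Hbd; lia|]. apply HN; lia. }
  destruct (Hc y HyY Hyrel Hcau) as [l [Hl Hconv]].
  exists l.
  assert (Hd0 : forall a b, (forall e, 0 < e -> d a b <= e) -> a = b).
  { intros a b H. apply (metric_zero _ Hd).
    pose proof (metric_nonneg _ Hd a b).
    destruct (Rle_lt_or_eq_dec 0 (d a b) H0) as [Hlt|Heq]; [|auto].
    specialize (H (d a b / 2) ltac:(lra)). lra. }
  symmetry. apply Hd0. intros e He.
  destruct Hcs as [Hcont | Hsc].
  - pose proof (Hcont l y Hyrel Hconv) as HT.
    destruct (Hconv (e/2) ltac:(lra)) as [N1 H1].
    destruct (HT (e/2) ltac:(lra)) as [N2 H2].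
    pose proof (H1 (S (N1 + N2)) ltac:(lia)).
    pose proof (H2 (N1 + N2)%nat ltac:(lia)).
    pose proof (metric_triangle _ Hd l (y (S (N1 + N2))) (T l)).
    pose proof (metric_sym _ Hd l (y (S (N1 + N2)))) as Hs.
    change (T (y (N1 + N2)%nat)) with (y (S (N1 + N2))) in H0.
    lra.
  - assert (Hpl : forall n, p (x n) l <= C * lam ^ n).
    { intro n. destruct (Rle_lt_dec (p (x n) l) (C * lam ^ n)) as [|Hgt]; [auto|].
      exfalso.
      destruct (wdist_w2 _ _ _ Hp (x n) l y Hyrel Hconv (p (x n) l - C * lam ^ n))
        as [N HN]; [lra|].
      specialize (HN (N + n)%nat ltac:(lia)).
      pose proof (Hbd n (S (N + n)) ltac:(lia)).
      unfold y in HN. lra. }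
    destruct (Hsc y l HyY ltac:(intro n; split; [apply Hrel|split; apply HyY]) Hconv)
      as [f [Hf Hfr]].
    destruct (wdist_w3 _ _ _ Hp e He) as [del [Hdel Hw]].
    destruct (Hsmall del Hdel) as [N HN].
    pose proof (incr_ge f Hf N) as HfN.
    destruct (Hfr N) as [HR _].
    set (m := S (f N)) in *.
    apply Hw with (z := x (S m)).
    + left. eapply Rle_lt_trans; [apply Hpl|]. apply HN; unfold m; lia.
    + left. eapply Rle_lt_trans.
      * change (x (S m)) with (T (y (f N))). apply Hcon, HR.
      * pose proof (Hpl m). pose proof (HN (S m) ltac:(unfold m; lia)).
        rewrite <- tech_pow_Rmult in H0. change (y (f N)) with (x m).
        apply Rmult_le_compat_l with (r := lam) in H; [|lra]. nra.
Qed.
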